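(* Let $G$ be a connected $\{K_4,K_{2,3},F_1,F_2\}$-induced-minor-free graph. Then $G$ has at most one hole.
   Context: A hole is an induced cycle of length at least $4$. $H$ is an induced minor of $G$ if $H$ can be obtained from $G$ by vertex deletions and edge contractions; $\mathcal F$-induced-minor-free means no member of $\mathcal F$ is an induced minor. $F_1$ is the graph consisting of two $4$-cycles sharing exactly one edge ($C_6$ plus a chord joining two antipodal vertices); $F_2$ is the graph consisting of two $4$-cycles sharing exactly one vertex. *)

(* Defs.v *)
From mathcomp Require Import all_boot.
Set Implicit Arguments. Unset Strict Implicit. Unset Printing Implicit Defensive.

(* A finite simple graph is given by a vertex type V : finType and an
   adjacency relation e : rel V that is symmetric and irreflexive. *)

Definition restrict_rel (V : finType) (e : rel V) (A : {set V}) : rel V :=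
  fun x y => [&& x \in A, y \in A & e x y].

Definition connected_set (V : finType) (e : rel V) (A : {set V}) : Prop :=
  forall x y, x \in A -> y \in A -> connect (restrict_rel e A) x y.

Definition connected_graph (V : finType) (e : rel V) : Prop :=
  forall x y : V, connect e x y.

(* This is equivalent to obtaining (W,f) (up to isomorphism) from (V,e) by
   vertex deletions and edge contractions. *)
Definition induced_minor (W : finType) (f : rel W) (V : finType) (e : rel V)
  : Prop :=
  exists phi : W -> {set V},
    [/\ (forall w, phi w != set0),
        (forall w, connected_set e (phi w)),
        (forall w1 w2, w1 != w2 -> [disjoint phi w1 & phi w2]) &
        (forall w1 w2, w1 != w2 ->
           (f w1 w2 <-> exists x y, [/\ x \in phi w1, y \in phi w2 & e x y]))].

Definition rel_of_edges {n : nat} (E : seq (nat * nat)) : rel 'I_n :=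
  fun i j => ((val i, val j) \in E) || ((val j, val i) \in E).

Definition K4 : rel 'I_4 :=
  @rel_of_edges 4 [:: (0,1); (0,2); (0,3); (1,2); (1,3); (2,3)].

Definition K23 : rel 'I_5 :=
  @rel_of_edges 5 [:: (0,2); (0,3); (0,4); (1,2); (1,3); (1,4)].

(* F1: C6 = 0-1-2-3-4-5-0 plus the antipodal chord 0-3
   (two 4-cycles 0123 and 0345 sharing exactly the edge 03). *)
Definition F1 : rel 'I_6 :=
  @rel_of_edges 6 [:: (0,1); (1,2); (2,3); (3,4); (4,5); (5,0); (0,3)].

(* F2: two 4-cycles 0123 and 0456 sharing exactly the vertex 0. *)
Definition F2 : rel 'I_7 :=
  @rel_of_edges 7 [:: (0,1); (1,2); (2,3); (3,0); (0,4); (4,5); (5,6); (6,0)].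

Definition hole (V : finType) (e : rel V) (S : {set V}) : Prop :=
  exists c : seq V,
    [/\ uniq c, 4 <= size c, S = [set x in c] &
        forall x0 i j, i < size c -> j < size c ->
          e (nth x0 c i) (nth x0 c j) =
          (j == i.+1 %% size c) || (i == j.+1 %% size c)].

(* Main.v *)
Require Import Defs.
From mathcomp Require Import all_boot zify.
From Stdlib Require Import Classical.
Set Implicit Arguments. Unset Strict Implicit. Unset Printing Implicit Defensive.


Section G.
Variables (V : finType) (e : rel V).
Hypothesis esym : symmetric e.
Hypothesis eirr : irreflexive e.

Definition adjs (A B : {set V}) := exists x y, [/\ x \in A, y \in B & e x y].

Lemma adjsC A B : adjs A B -> adjs B A.
Proof. by case=> x [y [*]]; exists y, x; rewrite esym. Qed.

Lemma adjs1 x y : adjs [set x] [set y] <-> e x y.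
Proof.
split; first by case=> a [b [/set1P -> /set1P ->]].
by move=> h; exists x, y; rewrite !set11.
Qed.

Lemma restrict_sym A : symmetric (restrict_rel e A).
Proof. by move=> x y; rewrite /restrict_rel esym andbCA. Qed.

Lemma connected_by (A : {set V}) r : r \in A ->
  (forall x, x \in A -> connect (restrict_rel e A) r x) -> connected_set e A.
Proof.
move=> rA h x y xA yA; apply: connect_trans (h _ yA).
by rewrite (sym_connect_sym (@restrict_sym A)); apply: h.
Qed.

Lemma connect_mono (A B : {set V}) x y : A \subset B ->
  connect (restrict_rel e A) x y -> connect (restrict_rel e B) x y.
Proof.
move=> sAB; apply: connect_sub => a b /and3P [aA bA eab].
by apply: connect1; rewrite /restrict_rel (subsetP sAB _ aA) (subsetP sAB _ bA).
Qed.

Lemma connected1 x : connected_set e [set x].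
Proof. by move=> a b /set1P -> /set1P ->. Qed.

Lemma connectedU A B : connected_set e A -> connected_set e B -> adjs A B ->
  connected_set e (A :|: B).
Proof.
move=> cA cB [a [b [aA bB eab]]].
apply: (@connected_by _ a); first by rewrite inE aA.
have sA : A \subset A :|: B by apply: subsetUl.
have sB : B \subset A :|: B by apply: subsetUr.
move=> x /setUP [xA|xB]; first by apply: connect_mono (cA _ _ aA xA).
apply: connect_trans (connect_mono sB (cB _ _ bB xB)).
by apply: connect1; rewrite /restrict_rel !inE aA bB orbT eab.
Qed.

Lemma path_connected x s : path e x s -> connected_set e [set y in x :: s].
Proof.
elim: s x => [|y s IH] x /=.
  move=> _; have -> : [set y in [:: x]] = [set x] by apply/setP=> z; rewrite !inE.
  exact: connected1.
case/andP=> exy ps.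
have -> : [set z in x :: y :: s] = [set x] :|: [set z in y :: s].
  by apply/setP=> z; rewrite !inE.
apply: connectedU; [exact: connected1| exact: IH |].
by exists x, y; rewrite set11 inE mem_head.
Qed.

Lemma model n (f : rel 'I_n) (L : seq {set V}) :
  (forall i j, f i j = f j i) ->
  (forall i, i < n -> nth set0 L i != set0) ->
  (forall i, i < n -> connected_set e (nth set0 L i)) ->
  (forall i j, i < j -> j < n -> [disjoint nth set0 L i & nth set0 L j]) ->
  (forall i j (Hi : i < n) (Hj : j < n), i < j ->
     (f (Ordinal Hi) (Ordinal Hj) <-> adjs (nth set0 L i) (nth set0 L j))) ->
  induced_minor f e.
Proof.
move=> fsym hne hc hd ha; exists (fun w : 'I_n => nth set0 L (val w)); split.
- by move=> w; apply: hne; apply: ltn_ord.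
- by move=> w; apply: hc; apply: ltn_ord.
- move=> [i Hi] [j Hj] /=; rewrite -val_eqE /= => nij.
  case: (ltngtP i j) nij => // lij _; first exact: hd.
  by rewrite disjoint_sym; apply: hd.
- move=> [i Hi] [j Hj]; rewrite -val_eqE /= => nij.
  case: (ltngtP i j) nij => // lij _; first exact: ha.
  rewrite fsym ha //; split; exact: adjsC.
Qed.

End G.


Section G.
Variables (V : finType) (e : rel V).
Hypothesis esym : symmetric e.

Ltac solve_pair :=
  rewrite /F1 /F2 /K4 /K23 /rel_of_edges /=;
  first [ by split=> // _
        | by split=> // h; exfalso; match goal with H : ~ _ |- _ => by apply: H end ].

Lemma F2_of (A0 A1 A2 A3 A4 A5 A6 : {set V}) :
  A0 != set0 -> A1 != set0 -> A2 != set0 -> A3 != set0 -> A4 != set0 -> A5 != set0 -> A6 != set0 ->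
  connected_set e A0 -> connected_set e A1 -> connected_set e A2 -> connected_set e A3 ->
  connected_set e A4 -> connected_set e A5 -> connected_set e A6 ->
  [disjoint A0 & A1] -> [disjoint A0 & A2] -> [disjoint A0 & A3] -> [disjoint A0 & A4] ->
  [disjoint A0 & A5] -> [disjoint A0 & A6] ->
  [disjoint A1 & A2] -> [disjoint A1 & A3] -> [disjoint A1 & A4] ->
  [disjoint A1 & A5] -> [disjoint A1 & A6] ->
  [disjoint A2 & A3] -> [disjoint A2 & A4] -> [disjoint A2 & A5] -> [disjoint A2 & A6] ->
  [disjoint A3 & A4] -> [disjoint A3 & A5] -> [disjoint A3 & A6] ->
  [disjoint A4 & A5] -> [disjoint A4 & A6] -> [disjoint A5 & A6] ->
  adjs e A0 A1 -> adjs e A1 A2 -> adjs e A2 A3 -> adjs e A0 A3 ->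
  adjs e A0 A4 -> adjs e A4 A5 -> adjs e A5 A6 -> adjs e A0 A6 ->
  ~ adjs e A0 A2 -> ~ adjs e A0 A5 -> ~ adjs e A1 A3 -> ~ adjs e A1 A4 ->
  ~ adjs e A1 A5 -> ~ adjs e A1 A6 -> ~ adjs e A2 A4 -> ~ adjs e A2 A5 ->
  ~ adjs e A2 A6 -> ~ adjs e A3 A4 -> ~ adjs e A3 A5 -> ~ adjs e A3 A6 ->
  ~ adjs e A4 A6 ->
  induced_minor F2 e.
Proof.
move=> n0 n1 n2 n3 n4 n5 n6 c0 c1 c2 c3 c4 c5 c6.
move=> d01 d02 d03 d04 d05 d06 d12 d13 d14 d15 d16 d23 d24 d25 d26 d34 d35 d36 d45 d46 d56.
move=> *.
apply: (@model V e esym 7 F2 [:: A0; A1; A2; A3; A4; A5; A6]).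
- by move=> i j; rewrite /F2 /rel_of_edges orbC.
- by move=> [|[|[|[|[|[|[|i]]]]]]].
- by move=> [|[|[|[|[|[|[|i]]]]]]].
- by move=> [|[|[|[|[|[|[|i]]]]]]] [|[|[|[|[|[|[|j]]]]]]].
move=> i j Hi Hj Hij.
case: i Hi Hij => [|[|[|[|[|[|[|i]]]]]]] Hi Hij;
case: j Hj Hij => [|[|[|[|[|[|[|j]]]]]]] Hj Hij //; solve_pair.
Qed.

Lemma F1_of (A0 A1 A2 A3 A4 A5 : {set V}) :
  A0 != set0 -> A1 != set0 -> A2 != set0 -> A3 != set0 -> A4 != set0 -> A5 != set0 ->
  connected_set e A0 -> connected_set e A1 -> connected_set e A2 -> connected_set e A3 ->
  connected_set e A4 -> connected_set e A5 ->
  [disjoint A0 & A1] -> [disjoint A0 & A2] -> [disjoint A0 & A3] -> [disjoint A0 & A4] ->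
  [disjoint A0 & A5] ->
  [disjoint A1 & A2] -> [disjoint A1 & A3] -> [disjoint A1 & A4] -> [disjoint A1 & A5] ->
  [disjoint A2 & A3] -> [disjoint A2 & A4] -> [disjoint A2 & A5] ->
  [disjoint A3 & A4] -> [disjoint A3 & A5] -> [disjoint A4 & A5] ->
  adjs e A0 A1 -> adjs e A1 A2 -> adjs e A2 A3 -> adjs e A3 A4 ->
  adjs e A4 A5 -> adjs e A0 A5 -> adjs e A0 A3 ->
  ~ adjs e A0 A2 -> ~ adjs e A0 A4 -> ~ adjs e A1 A3 -> ~ adjs e A1 A4 ->
  ~ adjs e A1 A5 -> ~ adjs e A2 A4 -> ~ adjs e A2 A5 -> ~ adjs e A3 A5 ->
  induced_minor F1 e.
Proof.
move=> n0 n1 n2 n3 n4 n5 c0 c1 c2 c3 c4 c5.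
move=> d01 d02 d03 d04 d05 d12 d13 d14 d15 d23 d24 d25 d34 d35 d45.
move=> *.
apply: (@model V e esym 6 F1 [:: A0; A1; A2; A3; A4; A5]).
- by move=> i j; rewrite /F1 /rel_of_edges orbC.
- by move=> [|[|[|[|[|[|i]]]]]].
- by move=> [|[|[|[|[|[|i]]]]]].
- by move=> [|[|[|[|[|[|i]]]]]] [|[|[|[|[|[|j]]]]]].
move=> i j Hi Hj Hij.
case: i Hi Hij => [|[|[|[|[|[|i]]]]]] Hi Hij;
case: j Hj Hij => [|[|[|[|[|[|j]]]]]] Hj Hij //; solve_pair.
Qed.

Lemma K4_of (A0 A1 A2 A3 : {set V}) :
  A0 != set0 -> A1 != set0 -> A2 != set0 -> A3 != set0 ->
  connected_set e A0 -> connected_set e A1 -> connected_set e A2 -> connected_set e A3 ->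
  [disjoint A0 & A1] -> [disjoint A0 & A2] -> [disjoint A0 & A3] ->
  [disjoint A1 & A2] -> [disjoint A1 & A3] -> [disjoint A2 & A3] ->
  adjs e A0 A1 -> adjs e A0 A2 -> adjs e A0 A3 -> adjs e A1 A2 ->
  adjs e A1 A3 -> adjs e A2 A3 ->
  induced_minor K4 e.
Proof.
move=> n0 n1 n2 n3 c0 c1 c2 c3.
move=> d01 d02 d03 d12 d13 d23.
move=> *.
apply: (@model V e esym 4 K4 [:: A0; A1; A2; A3]).
- by move=> i j; rewrite /K4 /rel_of_edges orbC.
- by move=> [|[|[|[|i]]]].
- by move=> [|[|[|[|i]]]].
- by move=> [|[|[|[|i]]]] [|[|[|[|j]]]].
move=> i j Hi Hj Hij.
case: i Hi Hij => [|[|[|[|i]]]] Hi Hij;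
case: j Hj Hij => [|[|[|[|j]]]] Hj Hij //; solve_pair.
Qed.

Lemma K23_of (A0 A1 A2 A3 A4 : {set V}) :
  A0 != set0 -> A1 != set0 -> A2 != set0 -> A3 != set0 -> A4 != set0 ->
  connected_set e A0 -> connected_set e A1 -> connected_set e A2 -> connected_set e A3 ->
  connected_set e A4 ->
  [disjoint A0 & A1] -> [disjoint A0 & A2] -> [disjoint A0 & A3] -> [disjoint A0 & A4] ->
  [disjoint A1 & A2] -> [disjoint A1 & A3] -> [disjoint A1 & A4] ->
  [disjoint A2 & A3] -> [disjoint A2 & A4] -> [disjoint A3 & A4] ->
  adjs e A0 A2 -> adjs e A0 A3 -> adjs e A0 A4 -> adjs e A1 A2 ->
  adjs e A1 A3 -> adjs e A1 A4 ->
  ~ adjs e A0 A1 -> ~ adjs e A2 A3 -> ~ adjs e A2 A4 -> ~ adjs e A3 A4 ->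
  induced_minor K23 e.
Proof.
move=> n0 n1 n2 n3 n4 c0 c1 c2 c3 c4.
move=> d01 d02 d03 d04 d12 d13 d14 d23 d24 d34.
move=> *.
apply: (@model V e esym 5 K23 [:: A0; A1; A2; A3; A4]).
- by move=> i j; rewrite /K23 /rel_of_edges orbC.
- by move=> [|[|[|[|[|i]]]]].
- by move=> [|[|[|[|[|i]]]]].
- by move=> [|[|[|[|[|i]]]]] [|[|[|[|[|j]]]]].
move=> i j Hi Hj Hij.
case: i Hi Hij => [|[|[|[|[|i]]]]] Hi Hij;
case: j Hj Hij => [|[|[|[|[|j]]]]] Hj Hij //; solve_pair.
Qed.

End G.


Lemma modeq2 n a b : 0 < n -> a < n + n -> b < n + n ->
  (a == b %[mod n]) = [|| a == b, a == b + n | b == a + n].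
Proof.
move=> n0 ha hb.
have h c : c < n + n -> c %% n = if c < n then c else c - n.
  move=> hc; case: ltnP => hcn; first by rewrite modn_small.
  by rewrite -{1}(subnK hcn) modnDr modn_small //; lia.
rewrite (h a) // (h b) //; case: ltnP => ?; case: ltnP => ?; lia.
Qed.

Section G.
Variables (V : finType) (e : rel V).
Hypothesis esym : symmetric e.
Hypothesis eirr : irreflexive e.

Definition cyc n (v : nat -> V) (S : {set V}) :=
 [/\ 3 < n, (forall i j, (v i == v j) = (i == j %[mod n])),
  (forall i j, e (v i) (v j) = (j == i.+1 %[mod n]) || (i == j.+1 %[mod n])) &
  (forall x, x \in S <-> exists2 i, i < n & x = v i)].

Lemma hole_cyc S : hole e S -> exists n v, cyc n v S.
Proof.
case=> c [uc sc -> hc].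
case: c uc sc hc => [//|x0 c'] uc sc hc.
set c := x0 :: c' in uc sc hc *.
set n := size c in sc hc *.
have n0 : 0 < n by lia.
exists n, (fun i => nth x0 c (i %% n)); split => //.
- by move=> i j; rewrite nth_uniq // ltn_pmod.
- move=> i j; rewrite hc ?ltn_pmod //.
  by rewrite -[(i %% n).+1]addn1 -[(j %% n).+1]addn1 !modnDml !addn1.
- move=> x; rewrite inE; split.
    by case/(nthP x0) => i hi <-; exists i => //; rewrite modn_small.
  by case=> i hi ->; rewrite modn_small // mem_nth.
Qed.

Section Cyc.
Variables (n : nat) (v : nat -> V) (S : {set V}).
Hypothesis Hc : cyc n v S.

Lemma cyc_n : 3 < n. Proof. by case: Hc. Qed.

Lemma cyc_eqE a b : a < n + n -> b < n + n ->
  (v a == v b) = [|| a == b, a == b + n | b == a + n].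
Proof. case: Hc => n4 hi _ _ ha hb; rewrite hi modeq2 //; lia. Qed.

Lemma cyc_adjE a b : a.+1 < n + n -> b.+1 < n + n ->
  e (v a) (v b) = [|| b == a.+1, b == a.+1 + n, a.+1 == b + n,
                      a == b.+1, a == b.+1 + n | b.+1 == a + n].
Proof. case: Hc => n4 _ he _ ha hb; rewrite he !modeq2 //; try lia. Qed.

Lemma cyc_mod i : v i = v (i %% n).
Proof. by case: Hc => n4 hi _ _; apply/eqP; rewrite hi modn_mod. Qed.

Lemma cyc_in i : v i \in S.
Proof.
case: Hc => n4 _ _ hm; apply/hm; exists (i %% n); first by rewrite ltn_pmod //; lia.
exact: cyc_mod.
Qed.

Lemma cyc_mem x : x \in S -> exists2 i, i < n & x = v i.
Proof. by case: Hc => _ _ _ hm /hm. Qed.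

Lemma cyc_rot k : cyc n (fun i => v (k + i)) S.
Proof.
case: Hc => n4 hi he hm; split => //.
- by move=> i j; rewrite hi eqn_modDl.
- by move=> i j; rewrite he -!addnS !eqn_modDl.
- move=> x; split.
    case/hm => i ilt ->.
    exists ((i + k * n - k) %% n); first by rewrite ltn_pmod //; lia.
    apply/eqP; rewrite hi modnDmr.
    have -> : k + (i + k * n - k) = k * n + i by nia.
    by rewrite modnMDl.
  case=> i _ ->; exact: cyc_in.
Qed.

Definition carc k m : {set V} := [set v (k + val t) | t : 'I_m].

Lemma in_arc k m x : x \in carc k m <-> exists2 t, t < m & x = v (k + t).
Proof.
split; first by case/imsetP => t _ ->; exists (val t) => //; apply: ltn_ord.
by case=> t tm ->; apply/imsetP; exists (Ordinal tm).
Qed.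

Lemma arc_sub k m : carc k m \subset S.
Proof. apply/subsetP => x hx. have [t _ ->] := (in_arc k m x).1 hx. apply: cyc_in. Qed.

Lemma arc_n0 k m : 0 < m -> carc k m != set0.
Proof.
move=> m0; apply/set0Pn; exists (v (k + 0)); apply/in_arc; by exists 0.
Qed.

Lemma arc_conn k m : 0 < m -> connected_set e (carc k m).
Proof.
move=> m0; apply: (@connected_by _ _ esym _ (v (k + 0))).
  by apply/in_arc; exists 0.
move=> x /in_arc [t tm ->]; elim: t tm => [//|t IH] tm.
apply: connect_trans (IH (ltnW tm)) _; apply: connect1.
rewrite /restrict_rel; apply/and3P; split.
- by apply/in_arc; exists t => //; apply: ltnW.
- by apply/in_arc; exists t.+1.
- by case: Hc => _ _ he _; rewrite he addnS eqxx.
Qed.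

Ltac ix := rewrite ?cyc_eqE ?cyc_adjE; try lia.

Lemma cyc_hdl0 : let M := carc 2 (n-3) in
  [/\ e (v 0) (v 1), e (v 0) (v (n-1)), v 1 != v (n-1), ~~ e (v 1) (v (n-1)) &
     [/\ v 0 \notin M, v 1 \notin M, v (n-1) \notin M, M != set0 & connected_set e M]] /\
  [/\ (exists2 z, z \in M & e (v 1) z), (exists2 z, z \in M & e (v (n-1)) z),
     (forall z, z \in M -> ~~ e (v 0) z) &
     (forall y, y \in S -> [|| y == v 0, y == v 1, y == v (n-1) | y \in M])].
Proof.
have n4 := cyc_n.
split; split; [| | | |split|..].
- by ix.
- by ix.
- by ix.
- by ix.
- by apply/negP => /in_arc [t ht /eqP]; ix.
- by apply/negP => /in_arc [t ht /eqP]; ix.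
- by apply/negP => /in_arc [t ht /eqP]; ix.
- by apply: arc_n0; lia.
- by apply: arc_conn; lia.
- by exists (v 2); [apply/in_arc; exists 0 => //; lia | ix].
- by exists (v (2 + (n - 4))); [apply/in_arc; exists (n - 4) => //; lia | ix].
- by move=> z /in_arc [t ht ->]; ix.
- move=> y /cyc_mem [i hi ->].
  case: (ltnP i 2) => h1.
    by case: i h1 hi => [|[|//]] _ _; rewrite eqxx ?orbT.
  case: (ltnP i (n-1)) => h2.
    apply/orP; right; apply/orP; right; apply/orP; right.
    by apply/in_arc; exists (i - 2); [lia | congr v; lia].
  have -> : i = n - 1 by lia.
  by rewrite eqxx !orbT.
Qed.

End Cyc.
Lemma hdl S x a : hole e S -> x \in S -> a \in S -> e x a ->
  exists q (M : {set V}),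
  [/\ q \in S, e x q, q != a, ~~ e a q &
   [/\ M \subset S, x \notin M, a \notin M, q \notin M & M != set0 /\ connected_set e M]] /\
  [/\ (exists2 z, z \in M & e a z), (exists2 z, z \in M & e q z),
     (forall z, z \in M -> ~~ e x z) &
     (forall y, y \in S -> [|| y == x, y == a, y == q | y \in M])].
Proof.
move=> /hole_cyc [n [v Hc]] /(cyc_mem Hc) [i hi ->] aS exa.
have Hw := cyc_rot Hc i.
set w := (fun j => v (i + j)) in Hw.
have n4 := cyc_n Hc.
have -> : v i = w 0 by rewrite /w addn0.
move: exa; rewrite [v i](_ : _ = w 0); last by rewrite /w addn0.
move=> exa.
move: aS exa => /(cyc_mem Hw) [j hj ->] exa.
have [[e1 e2 d12 ne12 [n0 n1 n2 Mn0 Mc]] [a1 a2 a3 a4]] := cyc_hdl0 Hw.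
have Msub := arc_sub Hw 2 (n - 3).
rewrite (cyc_adjE Hw) in exa; try lia.
have : (j == 1) || (j == n - 1) by lia.
case/orP => /eqP ->; [exists (w (n-1)), (carc w 2 (n-3)) | exists (w 1), (carc w 2 (n-3))];
  split; split => //; try exact: (cyc_in Hw); try split => //;
  try (by rewrite eq_sym); try (by rewrite esym).
all: by move=> y /a4; case/or4P => ->; rewrite ?orbT ?orTb.
Qed.

End G.


Section G.
Variables (V : finType) (e : rel V).
Hypothesis esym : symmetric e.
Hypothesis eirr : irreflexive e.

Lemma disjI (A B : {set V}) : (forall x, x \in A -> x \in B -> False) -> [disjoint A & B].
Proof.
move=> h; rewrite disjoint_subset; apply/subsetP => x xA; rewrite inE.
by apply/negP => xB; apply: h xA xB.
Qed.

Lemma disjE (A B : {set V}) x : [disjoint A & B] -> x \in A -> x \in B -> False.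
Proof. by move=> d xA xB; move: (disjointFr d xA); rewrite xB. Qed.

Definition Nb (X : {set V}) u := exists2 x, x \in X & e x u.

Section Cyc.
Variables (n : nat) (v : nat -> V) (S : {set V}).
Hypothesis Hc : cyc e n v S.

Ltac ix := rewrite ?(cyc_eqE Hc) ?(cyc_adjE Hc); try lia.

Lemma arc_disj k1 m1 k2 m2 : k1 + m1 <= k2 -> k2 + m2 <= n ->
  [disjoint carc v k1 m1 & carc v k2 m2].
Proof.
move=> h1 h2; apply: disjI => x /in_arc [t1 ht1 ->] /in_arc [t2 ht2 /eqP].
have := cyc_n Hc; ix.
Qed.

Lemma arc_adjs k1 m1 k2 m2 t1 t2 : t1 < m1 -> t2 < m2 ->
  e (v (k1 + t1)) (v (k2 + t2)) -> adjs e (carc v k1 m1) (carc v k2 m2).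
Proof.
by move=> h1 h2 he; exists (v (k1 + t1)), (v (k2 + t2)); split => //; apply/in_arc;
  [exists t1 | exists t2].
Qed.

Lemma Nb_adjs X k m t : t < m -> Nb X (v (k + t)) -> adjs e X (carc v k m).
Proof.
by move=> h [x xX ex]; exists x, (v (k + t)); split => //; apply/in_arc; exists t.
Qed.

Lemma Nb_n0 X u : Nb X u -> X != set0.
Proof. by case=> x xX _; apply/set0Pn; exists x. Qed.

Lemma K4case X t1 t2 : connected_set e X -> [disjoint X & S] ->
  0 < t1 -> t1 < t2 -> t2 < n ->
  Nb X (v 0) -> Nb X (v t1) -> Nb X (v t2) -> induced_minor K4 e.
Proof.
move=> cX dX h1 h2 h3 N0 N1 N2.
have n4 := cyc_n Hc.
have dXa k m : [disjoint X & carc v k m] by apply: disjointWr dX; apply: (arc_sub Hc).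
apply: (@K4_of _ e esym X (carc v 0 t1) (carc v t1 (t2 - t1)) (carc v t2 (n - t2))).
- exact: Nb_n0 N0.
- by apply: arc_n0.
- by apply: arc_n0; lia.
- by apply: arc_n0; lia.
- done.
- by apply: (arc_conn esym Hc).
- by apply: (arc_conn esym Hc) => //; lia.
- by apply: (arc_conn esym Hc) => //; lia.
- done.
- done.
- done.
- by apply: arc_disj; lia.
- by apply: arc_disj; lia.
- by apply: arc_disj; lia.
- by apply: (@Nb_adjs X 0 t1 0).
- by apply: (@Nb_adjs X t1 (t2 - t1) 0); rewrite ?addn0 //; lia.
- by apply: (@Nb_adjs X t2 (n - t2) 0); rewrite ?addn0 //; lia.
- by apply: (@arc_adjs _ _ _ _ (t1 - 1) 0); try lia; ix.
- by apply: (@arc_adjs _ _ _ _ 0 (n - t2 - 1)); try lia; ix.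
- by apply: (@arc_adjs _ _ _ _ (t2 - t1 - 1) 0); try lia; ix.
Qed.

Lemma K23case X j : connected_set e X -> [disjoint X & S] ->
  1 < j -> j < n - 1 ->
  Nb X (v 0) -> Nb X (v j) ->
  (forall t, t < n -> t != 0 -> t != j -> ~ Nb X (v t)) -> induced_minor K23 e.
Proof.
move=> cX dX h1 h2 N0 N1 Nn.
have n4 := cyc_n Hc.
have dXa k m : [disjoint carc v k m & X].
  by rewrite disjoint_sym; apply: disjointWr dX; apply: (arc_sub Hc).
have nadj k m : 0 < k -> k + m <= n -> ~~ (k <= j < k + m) -> ~ adjs e (carc v k m) X.
  move=> k0 km kj [x [y [/in_arc [t ht ->] yX exy]]].
  apply: (Nn (k + t)); [lia|lia|lia|by exists y => //; rewrite esym].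
apply: (@K23_of _ e esym (carc v 0 1) (carc v j 1) (carc v 1 (j - 1)) (carc v j.+1 (n - j.+1)) X).
- by apply: arc_n0.
- by apply: arc_n0.
- by apply: arc_n0; lia.
- by apply: arc_n0; lia.
- exact: Nb_n0 N0.
- by apply: (arc_conn esym Hc).
- by apply: (arc_conn esym Hc).
- by apply: (arc_conn esym Hc) => //; lia.
- by apply: (arc_conn esym Hc) => //; lia.
- done.
- by apply: arc_disj; lia.
- by apply: arc_disj; lia.
- by apply: arc_disj; lia.
- done.
- rewrite disjoint_sym; by apply: arc_disj; lia.
- by apply: arc_disj; lia.
- done.
- by apply: arc_disj; lia.
- done.
- done.
- by apply: (@arc_adjs _ _ _ _ 0 0); try lia; ix.
- by apply: (@arc_adjs _ _ _ _ 0 (n - j.+1 - 1)); try lia; ix.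
- by apply: adjsC => //; apply: (@Nb_adjs X 0 1 0).
- by apply: (@arc_adjs _ _ _ _ 0 (j - 2)); try lia; ix.
- by apply: (@arc_adjs _ _ _ _ 0 0); try lia; ix.
- by apply: adjsC => //; apply: (@Nb_adjs X j 1 0); rewrite ?addn0.
- by move=> [x [y [/in_arc [t ht ->] /in_arc [t' ht' ->]]]]; ix.
- by move=> [x [y [/in_arc [t ht ->] /in_arc [t' ht' ->]]]]; ix.
- by apply: nadj; lia.
- by apply: nadj; lia.
Qed.

End Cyc.

Lemma attach S X u w : hole e S -> connected_set e X -> [disjoint X & S] ->
  u \in S -> w \in S -> u != w -> Nb X u -> Nb X w ->
  ~ induced_minor K4 e -> ~ induced_minor K23 e -> e u w.
Proof.
move=> /hole_cyc [n [v Hc]] cX dX /(cyc_mem Hc) [i hi ->] wS nuw Nu Nw nK4 nK23.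
have Hw := cyc_rot Hc i.
set z := (fun j => v (i + j)) in Hw.
have n4 := cyc_n Hc.
move: nuw Nu Nw; rewrite [v i](_ : _ = z 0); last by rewrite /z addn0.
move: wS => /(cyc_mem Hw) [j hj ->] nuw Nu Nw.
apply/negPn/negP => nadj.
move: nuw nadj; rewrite (cyc_eqE Hw) ?(cyc_adjE Hw); try lia.
move=> h1 h2.
have h3 : 1 < j < n - 1 by lia.
case/andP: h3 => h3 h4.
case: (boolP [exists t : 'I_n, (val t != 0) && (val t != j) &&
                 [exists x in X, e x (z (val t))]]).
  case/existsP => [[t ht]] /= /andP [/andP [t0 tj] /existsP [x /andP [xX ex]]].
  have Nt : Nb X (z t) by exists x.
  case: (ltngtP t j) tj => // htj _.
    by apply: nK4; apply: (@K4case _ _ _ Hw X t j) => //; lia.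
  by apply: nK4; apply: (@K4case _ _ _ Hw X j t) => //; lia.
move=> hno; apply: nK23; apply: (@K23case _ _ _ Hw X j) => //.
move=> t ht t0 tj [x xX ex]; move/negP: hno; apply.
apply/existsP; exists (Ordinal ht); rewrite /= t0 tj /=.
by apply/existsP; exists x; rewrite xX.
Qed.

End G.


Section G.
Variables (V : finType) (e : rel V).
Hypothesis esym : symmetric e.
Hypothesis eirr : irreflexive e.

Lemma hole_nb S x : hole e S -> x \in S -> exists2 a, a \in S & e x a.
Proof.
move=> /hole_cyc [n [v Hc]] /(cyc_mem Hc) [i hi ->].
exists (v i.+1); first exact: (cyc_in Hc).
by case: Hc => _ _ he _; rewrite he eqxx.
Qed.

Lemma triangle S x y z : hole e S -> x \in S -> y \in S -> z \in S ->
  e x y -> e y z -> e x z -> False.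
Proof.
move=> hS xS yS zS exy eyz exz.
have [q [M [[qS exq qy nyq] [MS xM yM qM [Mn Mc]]] [_ _ nM all]]] := hdl esym hS xS yS exy.
case/or4P: (all _ zS) => [/eqP zE|/eqP zE|/eqP zE|zM].
- by move: exz; rewrite zE eirr.
- by move: eyz; rewrite zE eirr.
- by move: nyq; rewrite -zE eyz.
- by move: (nM _ zM); rewrite exz.
Qed.

Lemma hole_conn S : hole e S -> connected_set e S.
Proof.
move=> /hole_cyc [n [v Hc]].
have -> : S = carc v 0 n.
  apply/setP => x; apply/idP/idP => [/(cyc_mem Hc) [i hi ->]|/in_arc [t _ ->]].
    by apply/in_arc; exists i.
  exact: (cyc_in Hc).
by apply: (arc_conn esym Hc); have := cyc_n Hc; lia.
Qed.

Lemma disjW (A B A' B' : {set V}) : A \subset A' -> B \subset B' ->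
  [disjoint A' & B'] -> [disjoint A & B].
Proof.
move=> sA sB d; apply: disjI => x xA xB.
exact: disjE d (subsetP sA _ xA) (subsetP sB _ xB).
Qed.

Lemma nadjW (A B A' B' : {set V}) : A \subset A' -> B \subset B' ->
  ~ adjs e A' B' -> ~ adjs e A B.
Proof.
move=> sA sB h [x [y [xA yB exy]]]; apply: h; exists x, y.
by split => //; [apply: (subsetP sA) | apply: (subsetP sB)].
Qed.

Lemma adjs1l x (B : {set V}) : (exists2 y, y \in B & e x y) -> adjs e [set x] B.
Proof. by case=> y yB exy; exists x, y; rewrite set11. Qed.

Lemma adjs1r (A : {set V}) y : (exists2 x, x \in A & e x y) -> adjs e A [set y].
Proof. by case=> x xA exy; exists x, y; rewrite set11. Qed.

Lemma nadj1 (A : {set V}) y : (forall x, x \in A -> ~~ e x y) -> ~ adjs e A [set y].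
Proof. by move=> h [x [z [xA /set1P -> exy]]]; move: (h _ xA); rewrite exy. Qed.

Lemma nadj1l x (B : {set V}) : (forall y, y \in B -> ~~ e x y) -> ~ adjs e [set x] B.
Proof. by move=> h [z [y [/set1P -> yB exy]]]; move: (h _ yB); rewrite exy. Qed.

Lemma n0_1 (x : V) : [set x] != set0.
Proof. by apply/set0Pn; exists x; rewrite set11. Qed.

Lemma sub1 x (A : {set V}) : x \in A -> [set x] \subset A.
Proof. by rewrite sub1set. Qed.

Lemma disj11 (x y : V) : x != y -> [disjoint [set x] & [set y]].
Proof. by move=> h; rewrite disjoints1 inE. Qed.

Lemma disj1 x (B : {set V}) : x \notin B -> [disjoint [set x] & B].
Proof. by rewrite disjoints1. Qed.

Lemma disj1' (A : {set V}) x : x \notin A -> [disjoint A & [set x]].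
Proof. by rewrite disjoint_sym disjoints1. Qed.

Lemma F2_gen S1 S2 (K : {set V}) a b : hole e S1 -> hole e S2 -> connected_set e K ->
  a \in K -> b \in K -> a \in S1 -> b \in S2 ->
  [disjoint K & S1 :\ a] -> [disjoint K & S2 :\ b] ->
  [disjoint S1 :\ a & S2 :\ b] -> ~ adjs e (S1 :\ a) (S2 :\ b) ->
  (forall z, z \in S1 -> z != a -> Nb e K z -> e a z) ->
  (forall z, z \in S2 -> z != b -> Nb e K z -> e b z) ->
  induced_minor F2 e.
Proof.
move=> h1 h2 cK aK bK aS bS dK1 dK2 d12 n12 NK1 NK2.
have [p1 p1S ap1] := hole_nb h1 aS.
have [q1 [M1 [[q1S aq1 qp1 npq1] [M1S aM1 pM1 qM1 [M1n M1c]]] [pM1' qM1' naM1 all1]]] := hdl esym h1 aS p1S ap1.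
have [p2 p2S ap2] := hole_nb h2 bS.
have [q2 [M2 [[q2S aq2 qp2 npq2] [M2S aM2 pM2 qM2 [M2n M2c]]] [pM2' qM2' naM2 all2]]] := hdl esym h2 bS p2S ap2.
have neq x y : e x y -> x != y by move=> exy; apply/eqP => E; move: exy; rewrite E eirr.
have T1p : [set p1] \subset S1 :\ a by rewrite sub1set !inE eq_sym neq.
have T1q : [set q1] \subset S1 :\ a by rewrite sub1set !inE eq_sym neq.
have T1M : M1 \subset S1 :\ a.
  by apply/subsetP => x xM; rewrite !inE (subsetP M1S _ xM) andbT; apply: contraNneq aM1 => <-.
have T2p : [set p2] \subset S2 :\ b by rewrite sub1set !inE eq_sym neq.
have T2q : [set q2] \subset S2 :\ b by rewrite sub1set !inE eq_sym neq.
have T2M : M2 \subset S2 :\ b.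
  by apply/subsetP => x xM; rewrite !inE (subsetP M2S _ xM) andbT; apply: contraNneq aM2 => <-.
have Ksub : K \subset K by [].
have nKM (M : {set V}) S0 c : M \subset S0 :\ c -> (forall z, z \in M -> ~~ e c z) ->
    (forall z, z \in S0 -> z != c -> Nb e K z -> e c z) -> ~ adjs e K M.
  move=> sM hM hN [x [y [xK yM exy]]].
  have := subsetP sM _ yM; rewrite !inE => /andP [yc yS].
  by move: (hM _ yM); rewrite hN //; exists x.
apply: (@F2_of _ e esym K [set p1] M1 [set q1] [set p2] M2 [set q2]).
all: try exact: n0_1.
all: try exact: connected1.
all: try done.
all: try (by apply/set0Pn; exists a).
all: try (by apply: disjW dK1).
all: try (by apply: disjW dK2).
all: try (by apply: disjW d12).
all: try (by apply: nadjW n12).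
- by rewrite disjoints1.
- by apply: disj11; rewrite eq_sym.
- by rewrite disjoint_sym disjoints1.
- by rewrite disjoints1.
- by apply: disj11; rewrite eq_sym.
- by rewrite disjoint_sym disjoints1.
- by apply: adjs1r; exists a.
- exact: adjs1l pM1'.
- by apply: adjsC => //; apply: adjs1l qM1'.
- by apply: adjs1r; exists a.
- by apply: adjs1r; exists b.
- exact: adjs1l pM2'.
- by apply: adjsC => //; apply: adjs1l qM2'.
- by apply: adjs1r; exists b.
- exact: (nKM _ _ _ T1M naM1 NK1).
- exact: (nKM _ _ _ T2M naM2 NK2).
- by apply: nadj1l => y /set1P ->.
- by apply: nadj1l => y /set1P ->.
Qed.

Lemma disj2l (x y : V) (B : {set V}) : x \notin B -> y \notin B -> [disjoint [set x; y] & B].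
Proof. by move=> hx hy; apply: disjI => z /set2P [->|->]; apply/negP. Qed.

Lemma disj2r (A : {set V}) (x y : V) : x \notin A -> y \notin A -> [disjoint A & [set x; y]].
Proof. by move=> hx hy; rewrite disjoint_sym; apply: disj2l. Qed.

Lemma nadj2l (x y : V) (B : {set V}) : (forall z, z \in B -> ~~ e x z) ->
  (forall z, z \in B -> ~~ e y z) -> ~ adjs e [set x; y] B.
Proof.
move=> hx hy [u [z [/set2P [->|->] zB ez]]].
  by move: (hx _ zB); rewrite ez.
by move: (hy _ zB); rewrite ez.
Qed.

Lemma nadj2r (A : {set V}) (x y : V) : (forall z, z \in A -> ~~ e x z) ->
  (forall z, z \in A -> ~~ e y z) -> ~ adjs e A [set x; y].
Proof. by move=> hx hy /(adjsC esym); apply: nadj2l. Qed.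

Lemma conn2 (x y : V) : x = y \/ e x y -> connected_set e [set x; y].
Proof.
case=> [->|exy].
  by rewrite setUid; apply: connected1.
apply: (connectedU esym); try exact: connected1.
by exists x, y; rewrite !set11.
Qed.

Lemma n0_2 (x y : V) : [set x; y] != set0.
Proof. by apply/set0Pn; exists x; rewrite !inE eqxx. Qed.

Lemma F1_gen S1 S2 a1 a2 y1 y2 : hole e S1 -> hole e S2 ->
  a1 \in S1 -> y1 \in S1 -> a2 \in S2 -> y2 \in S2 -> e a1 y1 -> e a2 y2 ->
  (a1 = a2 \/ e a1 a2) -> (y1 = y2 \/ e y1 y2) ->
  [disjoint [set a1; a2] & [set y1; y2]] ->
  [disjoint [set a2; y2] & S1 :\: [set a1; y1]] ->
  [disjoint [set a1; y1] & S2 :\: [set a2; y2]] ->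
  [disjoint S1 :\: [set a1; y1] & S2 :\: [set a2; y2]] ->
  ~ adjs e (S1 :\: [set a1; y1]) (S2 :\: [set a2; y2]) ->
  (forall z, z \in S1 :\: [set a1; y1] -> e a2 z -> e a1 z) ->
  (forall z, z \in S1 :\: [set a1; y1] -> e y2 z -> e y1 z) ->
  (forall z, z \in S2 :\: [set a2; y2] -> e a1 z -> e a2 z) ->
  (forall z, z \in S2 :\: [set a2; y2] -> e y1 z -> e y2 z) ->
  induced_minor F1 e.
Proof.
move=> h1 h2 a1S y1S a2S y2S e1 e2 c0 c3 d03 dA1 dA2 d12 n12 N1 N2 N3 N4.
have e1' : e y1 a1 by rewrite esym.
have e2' : e y2 a2 by rewrite esym.
have [q1 [M1 [[q1S yq1 qa1 naq1] [M1S yM1 aM1 qM1 [M1n M1c]]] [aM1' qM1' nyM1 all1]]] :=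
  hdl esym h1 y1S a1S e1'.
have [q2 [M2 [[q2S yq2 qa2 naq2] [M2S yM2 aM2 qM2 [M2n M2c]]] [aM2' qM2' nyM2 all2]]] :=
  hdl esym h2 y2S a2S e2'.
have neq x y : e x y -> x != y by move=> exy; apply/eqP => E; move: exy; rewrite E eirr.
set R1 := S1 :\: [set a1; y1] in dA1 dA2 d12 n12 N1 N2 N3 N4 *.
set R2 := S2 :\: [set a2; y2] in dA1 dA2 d12 n12 N1 N2 N3 N4 *.
have q1R : q1 \in R1 by rewrite !inE negb_or qa1 q1S andbT eq_sym neq.
have q2R : q2 \in R2 by rewrite !inE negb_or qa2 q2S andbT eq_sym neq.
have M1R : M1 \subset R1.
  apply/subsetP => x xM; rewrite !inE negb_or (subsetP M1S _ xM) andbT.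
  by apply/andP; split; [apply: contraNneq aM1 => <- | apply: contraNneq yM1 => <-].
have M2R : M2 \subset R2.
  apply/subsetP => x xM; rewrite !inE negb_or (subsetP M2S _ xM) andbT.
  by apply/andP; split; [apply: contraNneq aM2 => <- | apply: contraNneq yM2 => <-].
have a2R : a2 \notin R1 by apply/negP => h; apply: (disjE dA1 _ h); rewrite !inE eqxx.
have y2R : y2 \notin R1 by apply/negP => h; apply: (disjE dA1 _ h); rewrite !inE eqxx orbT.
have a1R : a1 \notin R2 by apply/negP => h; apply: (disjE dA2 _ h); rewrite !inE eqxx.
have y1R : y1 \notin R2 by apply/negP => h; apply: (disjE dA2 _ h); rewrite !inE eqxx orbT.
have nin (x : V) (A B : {set V}) : A \subset B -> x \notin B -> x \notin A.
  by move=> sAB; apply: contra; apply: (subsetP sAB).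
apply: (@F1_of _ e esym [set a1; a2] M1 [set q1] [set y1; y2] [set q2] M2).
all: try exact: n0_1.
all: try exact: n0_2.
all: try exact: connected1.
all: try exact: conn2.
all: try done.
all: try (by apply: disjW d12; rewrite ?sub1set).
all: try (by apply: nadjW n12; rewrite ?sub1set).
- by apply: disj2l => //; apply: nin M1R a2R.
- by apply: disj2l; rewrite inE; [rewrite eq_sym | apply: contraNneq a2R => ->].
- by apply: disj2l; rewrite inE; [apply: contraNneq a1R => -> | rewrite eq_sym].
- by apply: disj2l => //; apply: nin M2R a1R.
- exact: disj1' qM1.
- by apply: disj2r => //; apply: nin M1R y2R.
- by apply: disj2r; rewrite inE; [apply: neq | apply: contraNneq y2R => ->].
- by apply: disj2l; rewrite inE; [apply: contraNneq y1R => -> | apply: neq].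
- by apply: disj2l => //; apply: nin M2R y1R.
- exact: disj1 qM2.
- by case: aM1' => z zM ez; exists a1, z; rewrite !inE eqxx.
- by apply: (adjsC esym); apply: adjs1l qM1'.
- by exists q1, y1; split; rewrite ?inE ?eqxx // esym.
- by exists y2, q2; rewrite !inE eqxx orbT.
- exact: adjs1l qM2'.
- by case: aM2' => z zM ez; exists a2, z; rewrite !inE eqxx orbT.
- by exists a1, y1; split; rewrite ?inE ?eqxx.
- apply: nadj1 => x /set2P [->|->] //.
  by apply/negP => /(N1 _ q1R); apply/negP.
- apply: nadj1 => x /set2P [->|->] //.
  by apply/negP => /(N3 _ q2R); apply/negP.
- apply: nadj2r => // z zM; apply/negP => /(N2 _ (subsetP M1R _ zM)).
  by apply/negP; apply: nyM1.
- apply: nadj2l => // z zM; apply/negP => /(N4 _ (subsetP M2R _ zM)).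
  by apply/negP; apply: nyM2.
Qed.

End G.


Ltac slia :=
  repeat match goal with
  | H : ?T |- _ =>
    lazymatch type of T with
    | Prop =>
      lazymatch T with
      | is_true (leq _ _) => fail
      | @eq nat _ _ => fail
      | is_true (~~ (?a == ?b)) =>
          let ta := type of a in tryif unify ta nat then fail else clear H
      | is_true (?a == ?b) =>
          let ta := type of a in tryif unify ta nat then fail else clear H
      | _ => clear H
      end
    end
  end; lia.

Section G.
Variables (V : finType) (e : rel V).
Hypothesis esym : symmetric e.
Hypothesis eirr : irreflexive e.
Hypothesis nK4 : ~ induced_minor K4 e.
Hypothesis nK23 : ~ induced_minor K23 e.
Hypothesis nF1 : ~ induced_minor F1 e.
Hypothesis nF2 : ~ induced_minor F2 e.

Lemma neq x y : e x y -> x != y.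
Proof. by move=> exy; apply/eqP => E; move: exy; rewrite E eirr. Qed.

Lemma att S X u w : hole e S -> connected_set e X -> [disjoint X & S] ->
  u \in S -> w \in S -> u != w -> Nb e X u -> Nb e X w -> e u w.
Proof. by move=> *; apply: (attach esym) nK4 nK23; eauto. Qed.

Lemma att_tri S X u w y : hole e S -> connected_set e X -> [disjoint X & S] ->
  u \in S -> w \in S -> e u w -> Nb e X u -> Nb e X w -> y \in S -> Nb e X y ->
  y = u \/ y = w.
Proof.
move=> hS cX dX uS wS euw Nu Nw yS Ny.
case: (eqVneq y u) => [->|yu]; [by left|].
case: (eqVneq y w) => [->|yw]; [by right|].
exfalso; apply: (triangle esym eirr hS uS wS yS euw).
  by rewrite esym; apply: (att hS cX dX yS wS yw Ny Nw).
by rewrite esym; apply: (att hS cX dX yS uS yu Ny Nu).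
Qed.

Lemma hole_n0 S : hole e S -> exists x, x \in S.
Proof. by move=> /hole_cyc [n [v Hc]]; exists (v 0); apply: (cyc_in Hc). Qed.

Lemma path_between (A B : {set V}) x y : x \in A -> y \in B -> [disjoint A & B] ->
  connect e x y -> exists a b s, [/\ a \in A, b \in B, path e a (rcons s b) &
     forall z, z \in s -> z \notin A /\ z \notin B].
Proof.
move=> xA yB dAB /connectP [p pp yE]; rewrite yE in yB.
have : exists a s, [/\ a \in A, path e a s, last a s = x &
         forall z, z \in s -> z \notin A /\ z \notin B] /\ x \notin B.
  by exists x, [::]; split; [split | apply/negP => /(disjE dAB xA)].
move: yB; elim: p x pp {xA yE} => [|z p IH] x /=.
  by move=> _ xB [a [s [_ /negP []]]].
case/andP => exz pz lB [a [s [[aA ps ls hs] xB]]].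
case: (boolP (z \in B)) => zB.
  exists a, z, s; split => //; by rewrite rcons_path ps ls.
apply: (IH z pz lB).
case: (boolP (z \in A)) => zA.
  by exists z, [::]; split => //; split.
exists a, (rcons s z); split => //; split => //.
- by rewrite rcons_path ps ls.
- by rewrite last_rcons.
- by move=> u; rewrite mem_rcons inE => /orP [/eqP ->|/hs].
Qed.

Lemma path_tail a u : path e a u -> u != [::] ->
  connected_set e [set x in u] /\ Nb e [set x in u] a.
Proof.
case: u => [//|h t] /= /andP [eah pt] _; split; first exact: (path_connected esym pt).
by exists h; [rewrite inE mem_head | rewrite esym].
Qed.

Lemma F2edge S1 S2 a b : hole e S1 -> hole e S2 -> [disjoint S1 & S2] ->
  a \in S1 -> b \in S2 -> e a b ->
  ~ adjs e (S1 :\ a) (S2 :\ b) -> False.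
Proof.
move=> h1 h2 d12 aS bS eab nadj.
apply: nF2; apply: (@F2_gen _ e esym eirr S1 S2 [set a; b] a b) => //.

- by apply: (conn2 esym); right.
- by rewrite !inE eqxx.
- by rewrite !inE eqxx orbT.
- apply: disjI => z /set2P [->|->]; rewrite !inE ?eqxx // => /andP [_ bS1].
  exact: disjE d12 bS1 bS.
- apply: disjI => z /set2P [->|->]; rewrite !inE ?eqxx // => /andP [_ aS2].
  exact: disjE d12 aS aS2.
- apply: disjI => z; rewrite !inE => /andP [_ zS1] /andP [_ zS2].
  exact: disjE d12 zS1 zS2.
- move=> z zS za [k /set2P [->|->] ekz]; first by [].
  apply: (att h1 (@connected1 _ e b)) => //.
  + by rewrite disjoints1; apply/negP => bS1; apply: (disjE d12 bS1 bS).
  + by rewrite eq_sym.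
  + by exists b; rewrite ?set11 // esym.
  + by exists b; rewrite ?set11.
- move=> z zS zb [k /set2P [->|->] ekz]; last by [].
  apply: (att h2 (@connected1 _ e a)) => //.
  + by rewrite disjoints1; apply/negP => aS2; apply: (disjE d12 aS aS2).
  + by rewrite eq_sym.
  + by exists a; rewrite ?set11.
  + by exists a; rewrite ?set11.
Qed.

Lemma edge_case S1 S2 a b : hole e S1 -> hole e S2 -> [disjoint S1 & S2] ->
  a \in S1 -> b \in S2 -> e a b -> False.
Proof.
move=> h1 h2 d12 aS bS eab.
apply: (F2edge h1 h2 d12 aS bS eab) => [[a' [b' [a'R b'R eab']]]].
move: a'R b'R; rewrite !inE => /andP [a'a a'S] /andP [b'b b'S].
have c1 := hole_conn esym h1.
have c2 := hole_conn esym h2.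
have d21 : [disjoint S2 & S1] by rewrite disjoint_sym.
have dne x y : x \in S1 -> y \in S2 -> x != y.
  by move=> xS yS; apply/eqP => E; rewrite E in xS; apply: (disjE d12 xS yS).
have Nb2 y z : z \in S2 -> e y z -> Nb e S2 y by move=> zS ez; exists z => //; rewrite esym.
have Nb1 y z : z \in S1 -> e z y -> Nb e S1 y by move=> zS ez; exists z.
have eaa' : e a a'.
  by apply: (att h1 c2 d21 aS a'S); [rewrite eq_sym | apply: Nb2 bS eab | apply: Nb2 b'S eab'].
have ebb' : e b b'.
  by apply: (att h2 c1 d12 bS b'S); [rewrite eq_sym | apply: Nb1 aS eab | apply: Nb1 a'S eab'].
have E1 y z : y \in S1 -> z \in S2 -> e y z -> y = a \/ y = a'.
  move=> yS zS eyz; apply: (att_tri h1 c2 d21 aS a'S eaa') => //.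
  - exact: Nb2 bS eab.
  - exact: Nb2 b'S eab'.
  - exact: Nb2 zS eyz.
have E2 y z : y \in S1 -> z \in S2 -> e y z -> z = b \/ z = b'.
  move=> yS zS eyz; apply: (att_tri h2 c1 d12 bS b'S ebb') => //.
  - exact: Nb1 aS eab.
  - exact: Nb1 a'S eab'.
  - exact: Nb1 yS eyz.
case: (boolP (e a b')) => eab2.
  case: (boolP (e a' b)) => ea'b.
    apply: nK4; apply: (@K4_of _ e esym [set a] [set a'] [set b] [set b']);
      (try exact: n0_1); (try exact: connected1);
      (try (apply: disj11; by [rewrite eq_sym | apply: dne])); by apply/adjs1.
  apply: (F2edge h1 h2 d12 aS b'S eab2) => [[y [z []]]].
  rewrite !inE => /andP [ya yS] /andP [zb zS] eyz.
  case: (E1 _ _ yS zS eyz) => yE; first by rewrite yE eqxx in ya.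
  case: (E2 _ _ yS zS eyz) => zE; last by rewrite zE eqxx in zb.
  by move: ea'b; rewrite -yE -zE eyz.
case: (boolP (e a' b)) => ea'b.
  apply: (F2edge h1 h2 d12 a'S bS ea'b) => [[y [z []]]].
  rewrite !inE => /andP [ya yS] /andP [zb zS] eyz.
  case: (E1 _ _ yS zS eyz) => yE; last by rewrite yE eqxx in ya.
  case: (E2 _ _ yS zS eyz) => zE; first by rewrite zE eqxx in zb.
  by move: eab2; rewrite -yE -zE eyz.
apply: nF1; apply: (@F1_gen _ e esym eirr S1 S2 a b a' b') => //.
- by right.
- by right.
- apply: disj2l; rewrite !inE negb_or.
    by rewrite eq_sym a'a dne.
  by rewrite eq_sym dne // eq_sym.
- by apply: disj2l; rewrite !inE negb_and negb_or ?(dne _ _ aS) ?(dne _ _ a'S) ?orbT //;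
    apply/orP; right; apply/negP => /(disjE d12) => h; [apply: h bS | apply: h b'S].
- by apply: disj2l; rewrite !inE negb_and negb_or; apply/orP; right;
    apply/negP => /(disjE d12) => h; [apply: h | ].
- apply: disjI => z; rewrite !inE => /andP [_ zS1] /andP [_ zS2].
  exact: disjE d12 zS1 zS2.
- move=> [y [z []]]; rewrite !inE !negb_or => /andP [/andP [ya ya'] yS] /andP [_ zS] eyz.
  by case: (E1 _ _ yS zS eyz) => yE; [rewrite yE eqxx in ya | rewrite yE eqxx in ya'].
- move=> z; rewrite !inE negb_or => /andP [/andP [za za'] zS] ebz.
  have := E1 _ _ zS bS; rewrite esym => /(_ ebz) [] zE.
    by rewrite zE eqxx in za.
  by rewrite zE eqxx in za'.
- move=> z; rewrite !inE negb_or => /andP [/andP [za za'] zS] ebz.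
  have := E1 _ _ zS b'S; rewrite esym => /(_ ebz) [] zE.
    by rewrite zE eqxx in za.
  by rewrite zE eqxx in za'.
- move=> z; rewrite !inE negb_or => /andP [/andP [za za'] zS] ebz.
  have := E2 _ _ aS zS ebz => [] [] zE.
    by rewrite zE eqxx in za.
  by rewrite zE eqxx in za'.
- move=> z; rewrite !inE negb_or => /andP [/andP [za za'] zS] ebz.
  have := E2 _ _ a'S zS ebz => [] [] zE.
    by rewrite zE eqxx in za.
  by rewrite zE eqxx in za'.
Qed.

Lemma disj_case S1 S2 : hole e S1 -> hole e S2 -> [disjoint S1 & S2] ->
  connected_graph e -> False.
Proof.
move=> h1 h2 d12 hc.
have [x xS] := hole_n0 h1; have [y yS] := hole_n0 h2.
have [a [b [s [aS bS ps hs]]]] := path_between xS yS d12 (hc x y).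
case: (classic (exists y z, [/\ y \in S1, z \in S2 & e y z])) => [[y' [z [yS' zS eyz]]]|noE].
  exact: edge_case h1 h2 d12 yS' zS eyz.
have bS1 : b \notin S1 by apply/negP => bS1; apply: (disjE d12 bS1 bS).
have aS2 : a \notin S2 by apply/negP => aS2; apply: (disjE d12 aS aS2).
have inK z : z \in [set x in a :: rcons s b] -> [\/ z = a, z = b | z \in s].
  rewrite inE in_cons mem_rcons in_cons => /orP [/eqP ->|/orP [/eqP ->|zs]].
  - exact: Or31. - exact: Or32. - exact: Or33.
move: ps; rewrite rcons_path => /andP [ps0 elb].
have ps : path e a (rcons s b) by rewrite rcons_path ps0 elb.
apply: nF2; apply: (@F2_gen _ e esym eirr S1 S2 [set x in a :: rcons s b] a b) => //.
- exact: (path_connected esym ps).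
- by rewrite inE mem_head.
- by rewrite inE in_cons mem_rcons mem_head orbT.
- apply: disjI => z /inK [->|->|zs]; rewrite !inE ?eqxx //.
    by rewrite (negbTE bS1) andbF.
  by case: (hs _ zs) => /negbTE -> _; rewrite andbF.
- apply: disjI => z /inK [->|->|zs]; rewrite !inE ?eqxx //.
    by rewrite (negbTE aS2) andbF.
  by case: (hs _ zs) => _ /negbTE ->; rewrite andbF.
- apply: disjI => z; rewrite !inE => /andP [_ zS1] /andP [_ zS2].
  exact: disjE d12 zS1 zS2.
- move=> [u [w []]]; rewrite !inE => /andP [_ uS] /andP [_ wS] euw.
  by apply: noE; exists u, w.
- move=> z zS za [k kK ekz].
  case: (eqVneq k a) => [kE|ka]; first by rewrite -kE.
  have rn : rcons s b != [::] by case: (s).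
  have [cKb NKb] := path_tail ps rn.
  rewrite esym; apply: (att h1 cKb) => //.
  + apply: disjI => u; rewrite inE mem_rcons in_cons => /orP [/eqP ->|us] uS.
      by rewrite uS in bS1.
    by case: (hs _ us); rewrite uS.
  + exists k => //; move: kK; rewrite inE in_cons => /orP [/eqP kE|kr]; last by rewrite inE.
    by rewrite kE eqxx in ka.
- move=> z zS zb [k kK ekz].
  case: (eqVneq k b) => [kE|kb]; first by rewrite -kE.
  rewrite esym; apply: (att h2 (path_connected esym ps0)) => //.
  + apply: disjI => u; rewrite inE in_cons => /orP [/eqP ->|us] uS.
      by rewrite uS in aS2.
    by case: (hs _ us); rewrite uS.
  + exists k => //; move: kK; rewrite !inE mem_rcons !in_cons => /orP [->//|/orP [/eqP kE|->]]; last by rewrite orbT.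
    by rewrite kE eqxx in kb.
  + by exists (last a s); [rewrite inE mem_last | ].
Qed.

Lemma meet_case S1 S2 x : hole e S1 -> hole e S2 -> x \in S1 -> x \in S2 ->
  ~~ (S2 \subset S1) -> False.
Proof.
move=> h1 h2 xS1 xS2 /subsetPn [y yS2 yS1].
have [n [v Hc]] := hole_cyc h2.
have n4 := cyc_n Hc.
have [i0 _ xE] := cyc_mem Hc xS2.
have [j0 _ yE] := cyc_mem Hc yS2.
have [k [vk vk1]] : exists k, v k \in S1 /\ v k.+1 \notin S1.
  apply: NNPP => H.
  have allS t : v (i0 + t) \in S1.
    elim: t => [|t IH]; first by rewrite addn0 -xE.
    rewrite addnS; apply: NNPP => hn; apply: H; exists (i0 + t); split => //.
    by apply/negP.
  move: (allS (j0 + i0 * n - i0)); rewrite yE in yS1.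
  have -> : v (i0 + (j0 + i0 * n - i0)) = v j0.
    apply/eqP; case: Hc => _ hi _ _; rewrite hi.
    have -> : i0 + (j0 + i0 * n - i0) = i0 * n + j0 by move: n4; clear; nia.
    by rewrite /= modnMDl.
  by rewrite (negbTE yS1).
have Hw := cyc_rot Hc k.
set w := (fun t => v (k + t)) in Hw.
have w0S : w 0 \in S1 by rewrite /w addn0.
have w1S : w 1 \notin S1 by rewrite /w addn1.
have exP : exists m, (0 < m) && (w m \in S1).
  exists n; rewrite (_ : w n = w 0) ?w0S; first by slia.
  by apply/eqP; rewrite (cyc_eqE Hw); slia.
case: (ex_minnP exP) => m /andP [m0 wmS] mmin.
have mn : m <= n.
  by apply: mmin; rewrite (_ : w n = w 0) ?w0S; [slia | apply/eqP; rewrite (cyc_eqE Hw); slia].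
have m1 : 1 < m.
  by case: m m0 wmS {mmin mn} => [|[|m]] //; rewrite (negbTE w1S).
have hX t : 0 < t -> t < m -> w t \notin S1.
  move=> t0 tm; apply/negP => wt; have := mmin t; rewrite t0 wt => /(_ isT); slia.
set X := carc w 1 (m - 1).
have cX : connected_set e X by apply: (arc_conn esym Hw); slia.
have dX : [disjoint X & S1].
  apply: disjI => z /in_arc [t tm ->]; apply/negP; apply: hX; slia.
have XS2 : X \subset S2 by apply: (arc_sub Hw).
have NbXa : Nb e X (w 0).
  exists (w 1); first by apply/in_arc; exists 0 => //; slia.
  by rewrite (cyc_adjE Hw); slia.
have NbXm : Nb e X (w m).
  exists (w (1 + (m - 2))); first by apply/in_arc; exists (m - 2) => //; slia.
  by rewrite (cyc_adjE Hw); slia.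
have aS2 : w 0 \in S2 by apply: (cyc_in Hw).
have mS2 : w m \in S2 by apply: (cyc_in Hw).
case: (ltnP m n) => mlt.
  have nam : w 0 != w m by rewrite (cyc_eqE Hw); slia.
  have eam := att h1 cX dX w0S wmS nam NbXa NbXm.
  have mE : m = n - 1 by move: eam; rewrite (cyc_adjE Hw); slia.
  have R2X z : z \in S2 :\: [set w 0; w m] -> z \in X.
    rewrite !inE negb_or => /andP [/andP [za zb] /(cyc_mem Hw) [t tn zE]].
    apply/in_arc; exists (t - 1).
      case: (posnP t) => [t0|tp]; first by rewrite zE t0 eqxx in za.
      case: (ltnP t (n - 1)) => tl; first slia.
      have tE : t = m by slia.
      by rewrite zE tE eqxx in zb.
    case: (posnP t) => [t0|tp]; first by rewrite zE t0 eqxx in za.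
    by rewrite zE; congr w; slia.
  apply: nF1; apply: (@F1_gen _ e esym eirr S1 S2 (w 0) (w 0) (w m) (w m)) => //.
  - by left.
  - by left.
  - by apply: disj2l; rewrite !inE orbb.
  - by apply: disj2l; rewrite !inE eqxx ?orbT.
  - by apply: disj2l; rewrite !inE eqxx ?orbT.
  - apply: disjI => z /setDP [zS1 _] zR.
    exact: disjE dX (R2X _ zR) zS1.
  - move=> [u [z []]] uR zR euz; have zX := R2X _ zR.
    move: uR; rewrite !inE negb_or => /andP [/andP [ua ub] uS].
    have NbXu : Nb e X u by exists z => //; rewrite esym.
    case: (att_tri h1 cX dX w0S wmS eam NbXa NbXm uS NbXu) => uE.
      by rewrite uE eqxx in ua.
    by rewrite uE eqxx in ub.
have mE : m = n by apply/eqP; rewrite eqn_leq mn mlt.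
have S2X z : z \in S2 -> z != w 0 -> z \in X.
  move=> /(cyc_mem Hw) [t tn zE] za.
  case: (posnP t) => [t0|tp]; first by rewrite zE t0 eqxx in za.
  by apply/in_arc; exists (t - 1); [slia | rewrite zE; congr w; slia].
have S12 z : z \in S1 -> z \in S2 -> z = w 0.
  move=> zS1 zS2; apply/eqP; apply: contraT => za.
  exfalso; exact: disjE dX (S2X _ zS2 za) zS1.
case: (classic (exists y z, [/\ y \in S1, y != w 0, z \in S2, z != w 0 & e y z]))
  => [[y' [z [yS ya zS za eyz]]]|noE].
  have zX := S2X _ zS za.
  have eya : e y' (w 0) by apply: (att h1 cX dX yS w0S ya) => //; exists z => //; rewrite esym.
  have ynS2 : y' \notin S2 by apply/negP => /(S12 _ yS) yE'; rewrite yE' eqxx in ya.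
  have zS1 : z \notin S1 by apply/negP => /S12 /(_ zS) zE; rewrite zE eqxx in za.
  have dy : [disjoint [set y'] & S2] by rewrite disjoints1.
  have dz : [disjoint [set z] & S1] by rewrite disjoints1.
  have eaz : e (w 0) z.
    apply: (att h2 (@connected1 _ e y') dy aS2 zS) => //; first by rewrite eq_sym.
    + by exists y'; rewrite ?set11.
    + by exists y'; rewrite ?set11.
  have eay : e (w 0) y' by rewrite esym.
  have NbXy : Nb e X y' by exists z => //; rewrite esym.
  apply: nF1; apply: (@F1_gen _ e esym eirr S1 S2 (w 0) (w 0) y' z) => //.
  - by left.
  - by right.
  - by apply: disj2l; rewrite !inE negb_or (neq eay) (neq eaz).
  - by apply: disj2l; rewrite !inE ?eqxx // negb_and zS1 orbT.
  - by apply: disj2l; rewrite !inE ?eqxx // negb_and ynS2 orbT.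
  - apply: disjI => u /setDP [uS1 un] /setDP [uS2 un'].
    by move: un; rewrite (S12 _ uS1 uS2) !inE eqxx.
  - move=> [u [z' []]] uR zR euz.
    move: uR zR; rewrite !inE !negb_or => /andP [/andP [ua uy] uS] /andP [/andP [za' _] zS'].
    have NbXu : Nb e X u by exists z'; [apply: S2X | rewrite esym].
    case: (att_tri h1 cX dX w0S yS eay NbXa NbXy uS NbXu) => uE.
      by rewrite uE eqxx in ua.
    by rewrite uE eqxx in uy.
  - move=> u; rewrite !inE negb_or => /andP [/andP [ua uy] uS] ezu; exfalso.
    have N1 : Nb e [set z] (w 0) by exists z; rewrite ?set11 // esym.
    have N2 : Nb e [set z] y' by exists z; rewrite ?set11 // esym.
    case: (att_tri h1 (@connected1 _ e z) dz w0S yS eay N1 N2 uS) => [|uE|uE].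
    + by exists z; rewrite ?set11.
    + by rewrite uE eqxx in ua.
    + by rewrite uE eqxx in uy.
  - move=> u; rewrite !inE negb_or => /andP [/andP [ua uz] uS] eyu; exfalso.
    have N1 : Nb e [set y'] (w 0) by exists y'; rewrite ?set11.
    have N2 : Nb e [set y'] z by exists y'; rewrite ?set11.
    case: (att_tri h2 (@connected1 _ e y') dy aS2 zS eaz N1 N2 uS) => [|uE|uE].
    + by exists y'; rewrite ?set11.
    + by rewrite uE eqxx in ua.
    + by rewrite uE eqxx in uz.
apply: nF2; apply: (@F2_gen _ e esym eirr S1 S2 [set w 0] (w 0) (w 0)) => //.
- exact: connected1.
- by rewrite set11.
- by rewrite set11.
- by rewrite disjoints1 !inE eqxx.
- by rewrite disjoints1 !inE eqxx.
- apply: disjI => u /setD1P [ua uS1] /setD1P [_ uS2].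
  by rewrite (S12 _ uS1 uS2) eqxx in ua.
- move=> [u [z []]] /setD1P [ua uS] /setD1P [za zS] euz.
  by apply: noE; exists u, z.
- by move=> z _ _ [k' /set1P -> ekz].
- by move=> z _ _ [k' /set1P -> ekz].
Qed.

End G.


Theorem lemma4p5 (V : finType) (e : rel V) :
  symmetric e -> irreflexive e ->
  connected_graph e ->
  ~ induced_minor K4 e -> ~ induced_minor K23 e ->
  ~ induced_minor F1 e -> ~ induced_minor F2 e ->
  forall S1 S2 : {set V}, hole e S1 -> hole e S2 -> S1 = S2.
Proof.
move=> esym eirr hc nK4 nK23 nF1 nF2 S1 S2 h1 h2.
case: (boolP [disjoint S1 & S2]) => d.
  by case: (disj_case esym eirr nK4 nK23 nF1 nF2 h1 h2 d hc).
have [x [x1 x2]] : exists x, x \in S1 /\ x \in S2.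
  apply: NNPP => nx; move/negP: d; apply; apply: disjI => z z1 z2; apply: nx; exists z.
  by split.
case: (boolP (S2 \subset S1)) => s21.
  case: (boolP (S1 \subset S2)) => s12.
    by apply/eqP; rewrite eqEsubset s12 s21.
  by case: (meet_case esym eirr nK4 nK23 nF1 nF2 h2 h1 x2 x1 s12).
by case: (meet_case esym eirr nK4 nK23 nF1 nF2 h1 h2 x1 x2 s21).
Qed.
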